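(* Let $\alpha$ be an ordinal and let $X$ be a metric space expressed as a union $X=\bigcup_{i\in I}X_i$. Suppose that $\{X_i\}_{i\in I}\in\mathfrak{C}_\alpha$ and that for every $r>0$ there is a subspace $Y(r)\subset X$ with $\{Y(r)\}\in\mathfrak{C}_\alpha$ such that the collection $\{X_i\setminus Y(r)\}_{i\in I}$ is $r$-disjoint. Then $\{X\}\in\mathfrak{C}_{\alpha+1}$.
   Context: A family $\mathcal{U}$ of metric subspaces of a metric space $(X,d)$ is $r$-disjoint if $d(x,y)>r$ whenever $x\in U$, $y\in U'$, $U\neq U'$ in $\mathcal{U}$. For families $\mathcal{X},\mathcal{Y}$ and $R\in\mathbb{R}^{\mathbb{N}}$, $\mathcal{X}\xrightarrow{R}\mathcal{Y}$ means: there is an integer $k$ such that for each $X\in\mathcal{X}$ there are subcollections $\mathcal{U}_1,\dots,\mathcal{U}_k\subseteq\mathcal{Y}$ of subspaces of $X$, each $\mathcal{U}_i$ being $R_i$-disjoint, with $\bigcup_i\mathcal{U}_i$ covering $X$. A family is bounded if the diameters of its members are uniformly bounded. $\mathfrak{C}_0$ is the class of bounded families; for an ordinal $\alpha>0$, $\mathfrak{C}_\alpha$ is the class of families $\mathcal{X}$ such that for every $R\in\mathbb{R}^{\mathbb{N}}$ there exist $\beta<\alpha$ and $\mathcal{Y}\in\mathfrak{C}_\beta$ with $\mathcal{X}\xrightarrow{R}\mathcal{Y}$. All subspaces carry the induced metric. *)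

(* Defs.v *)
From Stdlib Require Import Reals.
Open Scope R_scope.

Definition is_metric {M : Type} (d : M -> M -> R) : Prop :=
  (forall x y, 0 <= d x y) /\
  (forall x y, d x y = 0 <-> x = y) /\
  (forall x y, d x y = d y x) /\
  (forall x y z, d x z <= d x y + d y z).

(* Subspaces of the metric space (M,d) are subsets of M (induced metric);
   a family of subspaces is a set of subsets. *)
Definition subspace (M : Type) := M -> Prop.
Definition family (M : Type) := subspace M -> Prop.

Definition r_disjoint {M : Type} (d : M -> M -> R) (r : R) (F : family M) : Prop :=
  forall (U U' : subspace M) (x y : M),
    F U -> F U' -> U <> U' -> U x -> U' y -> d x y > r.

Definition bounded_family {M : Type} (d : M -> M -> R) (F : family M) : Prop :=
  exists D : R, forall (U : subspace M) (x y : M), F U -> U x -> U y -> d x y <= D.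

Definition arrow {M : Type} (d : M -> M -> R)
  (FX : family M) (Rs : nat -> R) (FY : family M) : Prop :=
  exists k : nat, forall X : subspace M, FX X ->
    exists Us : nat -> family M,
      (forall i, (1 <= i <= k)%nat ->
         (forall U, Us i U -> FY U) /\
         (forall U, Us i U -> forall x, U x -> X x) /\
         r_disjoint d (Rs i) (Us i)) /\
      (forall x, X x -> exists i U, (1 <= i <= k)%nat /\ Us i U /\ U x).

(* Ordinals are represented as elements of a well-ordered type (T, lt).
   The classes 𝔆_a are defined by (well-founded) recursion on a:
   𝔆_a = bounded families if a is the least ordinal (0);
   otherwise 𝔆_a = families 𝒳 such that for every R there are b < a and
   𝒴 ∈ 𝔆_b with 𝒳 -R-> 𝒴.  Since lt is well-founded, the inductive
   (least fixed point) reading coincides with the recursive definition. *)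
Definition well_order {T : Type} (lt : T -> T -> Prop) : Prop :=
  well_founded lt /\
  (forall a b c, lt a b -> lt b c -> lt a c) /\
  (forall a b, lt a b \/ a = b \/ lt b a).

Inductive Cls {M : Type} (d : M -> M -> R) {T : Type} (lt : T -> T -> Prop)
  : T -> family M -> Prop :=
| Cls_zero : forall (a : T) (F : family M),
    (forall b, ~ lt b a) -> bounded_family d F -> Cls d lt a F
| Cls_step : forall (a : T) (F : family M),
    (exists b, lt b a) ->
    (forall Rs : nat -> R, exists b, lt b a /\
        exists G : family M, Cls d lt b G /\ arrow d F Rs G) ->
    Cls d lt a F.

Definition single {M : Type} (A : subspace M) : family M := fun U => U = A.

Definition fam_of {M I : Type} (Xs : I -> subspace M) : family M :=
  fun U => exists i, U = Xs i.

(* Main.v *)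
Require Import Defs.
From Stdlib Require Import Reals Lia Lra Classical.
Open Scope R_scope.

Lemma cls_mono {M : Type} (d : M -> M -> R) {T : Type} (lt : T -> T -> Prop)
  b c F : Cls d lt b F -> lt b c -> Cls d lt c F.
Proof.
  intros H Hbc. apply Cls_step; [exists b; exact Hbc|].
  intros Rs. exists b. split; [exact Hbc|]. exists F. split; [exact H|].
  exists 1%nat. intros X HX. exists (fun _ U => U = X). split.
  - intros i Hi. split; [|split].
    + intros U ->; exact HX.
    + intros U -> x Hx; exact Hx.
    + intros U U' x y -> -> Hne; congruence.
  - intros x Hx. exists 1%nat, X. split; [lia|]. auto.
Qed.

Definition refines {M : Type} (F F1 F2 : Defs.family M) : Prop :=
  forall U, F U -> exists V, (F1 V \/ F2 V) /\ forall x, U x -> V x.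

Lemma arrow_restrict {M : Type} (d : M -> M -> R) (F1 G1 G : Defs.family M) Rs k1 V X :
  (forall X, F1 X -> exists Us : nat -> Defs.family M,
      (forall i, (1 <= i <= k1)%nat ->
         (forall U, Us i U -> G1 U) /\
         (forall U, Us i U -> forall x, U x -> X x) /\
         r_disjoint d (Rs i) (Us i)) /\
      (forall x, X x -> exists i U, (1 <= i <= k1)%nat /\ Us i U /\ U x)) ->
  (forall W, G1 W -> forall U, (forall x, U x -> W x) -> G U) ->
  forall k, (k1 <= k)%nat -> F1 V -> (forall x, X x -> V x) ->
  exists Us : nat -> Defs.family M,
      (forall i, (1 <= i <= k)%nat ->
         (forall U, Us i U -> G U) /\
         (forall U, Us i U -> forall x, U x -> X x) /\
         r_disjoint d (Rs i) (Us i)) /\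
      (forall x, X x -> exists i U, (1 <= i <= k)%nat /\ Us i U /\ U x).
Proof.
  intros Hk1 HG k Hk HV Hsub.
  destruct (Hk1 V HV) as [Us [HUs Hcov]].
  exists (fun i U => (1<=i<=k1)%nat /\ exists W, Us i W /\ U = (fun x => W x /\ X x)).
  split.
  - intros i Hi. split; [|split].
    + intros U [Hi' [W [HW ->]]]. apply (HG W).
      * exact (proj1 (HUs i Hi') W HW).
      * intros x [Hx _]; exact Hx.
    + intros U [_ [W [_ ->]]] x [_ Hx]; exact Hx.
    + intros U U' x y [Hi' [W [HW ->]]] [_ [W' [HW' ->]]] Hne [Hwx _] [Hwy _].
      destruct (HUs i Hi') as [_ [_ Hdis]].
      apply (Hdis W W' x y HW HW'); auto.
      intro e; apply Hne; subst; reflexivity.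
  - intros x Hx. destruct (Hcov x (Hsub x Hx)) as [i [W [Hi [HW HWx]]]].
    exists i, (fun z => W z /\ X z). split; [lia|].
    split; [split; [lia| exists W; auto] | split; auto].
Qed.

Lemma cls_union {M : Type} (d : M -> M -> R) {T : Type} (lt : T -> T -> Prop)
  (wf : well_founded lt) (tri : forall a b, lt a b \/ a = b \/ lt b a) :
  forall a F1 F2 F, Cls d lt a F1 -> Cls d lt a F2 -> refines F F1 F2 -> Cls d lt a F.
Proof.
  intro a. induction a as [a IH] using (well_founded_ind wf).
  intros F1 F2 F H1 H2 HF.
  inversion H1 as [a' F' Hmin [D1 HD1] | a' F' Hex Hst1]; subst.
  - inversion H2 as [a' F' _ [D2 HD2] | a' F' [b Hb] _]; subst.
    + apply Cls_zero; [exact Hmin|]. exists (Rmax D1 D2).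
      intros U x y HU Ux Uy. destruct (HF U HU) as [V [[HV|HV] Hs]].
      * eapply Rle_trans; [apply (HD1 V); auto|]. apply Rmax_l.
      * eapply Rle_trans; [apply (HD2 V); auto|]. apply Rmax_r.
    + exfalso; exact (Hmin b Hb).
  - inversion H2 as [a' F' Hmin _ | a' F' _ Hst2]; subst.
    + exfalso; destruct Hex as [b Hb]; exact (Hmin b Hb).
    + apply Cls_step; [exact Hex|]. intros Rs.
      destruct (Hst1 Rs) as [b1 [lb1 [G1 [HG1 [k1 Hk1]]]]].
      destruct (Hst2 Rs) as [b2 [lb2 [G2 [HG2 [k2 Hk2]]]]].
      assert (Hb : exists b, lt b a /\ Cls d lt b G1 /\ Cls d lt b G2).
      { destruct (tri b1 b2) as [l | [e | l]].
        - exists b2. split; [auto|]. split; [eapply cls_mono; eauto | auto].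
        - subst. exists b2. auto.
        - exists b1. split; [auto|]. split; [auto | eapply cls_mono; eauto]. }
      destruct Hb as [b [lb [C1 C2]]].
      set (G := fun U => exists V, (G1 V \/ G2 V) /\ forall x, U x -> V x).
      exists b. split; [exact lb|]. exists G. split.
      * apply (IH b lb G1 G2 G C1 C2). intros U HU; exact HU.
      * exists (Nat.max k1 k2). intros X HX.
        destruct (HF X HX) as [V [[HV|HV] Hsub]].
        -- eapply (arrow_restrict d F1 G1 G Rs k1 V X Hk1); auto; [|lia].
           intros W HW U HU. exists W; auto.
        -- eapply (arrow_restrict d F2 G2 G Rs k2 V X Hk2); auto; [|lia].
           intros W HW U HU. exists W; auto.
Qed.

Theorem theorem4p1
  (T : Type) (lt : T -> T -> Prop) (Hwo : well_order lt)
  (a a1 : T) (Hsucc : forall b, lt b a1 <-> (lt b a \/ b = a))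
  (M : Type) (d : M -> M -> R) (Hd : is_metric d)
  (I : Type) (Xs : I -> subspace M)
  (Hcover : forall x : M, exists i, Xs i x)
  (HXs : Cls d lt a (fam_of Xs))
  (Y : R -> subspace M)
  (HY : forall r : R, r > 0 ->
     Cls d lt a (single (Y r)) /\
     r_disjoint d r (fam_of (fun i x => Xs i x /\ ~ Y r x))) :
  Cls d lt a1 (single (fun _ : M => True)).
Proof.
  destruct Hwo as [wf [_ tri]].
  assert (Ha : lt a a1) by (apply Hsucc; auto).
  apply Cls_step; [exists a; exact Ha|].
  intros Rs. exists a. split; [exact Ha|].
  set (r := Rabs (Rs 1%nat) + 1).
  assert (Hr : r > 0) by (unfold r; pose proof (Rabs_pos (Rs 1%nat)); lra).
  destruct (HY r Hr) as [HYc Hdis].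
  set (F1 := fam_of (fun i x => Xs i x /\ ~ Y r x)).
  exists (fun U => F1 U \/ U = Y r). split.
  - apply (cls_union d lt wf tri a (fam_of Xs) (single (Y r))); auto.
    intros U [[i ->] | ->].
    + exists (Xs i). split; [left; exists i; reflexivity|]. intros x [Hx _]; exact Hx.
    + exists (Y r). split; [right; reflexivity|]. auto.
  - exists 2%nat. intros X HX. unfold single in HX; subst X.
    exists (fun i U => if Nat.eqb i 1 then F1 U else U = Y r). split.
    + intros i Hi. destruct (Nat.eqb i 1) eqn:E.
      * apply Nat.eqb_eq in E; subst i. split; [|split].
        -- intros U HU; left; exact HU.
        -- auto.
        -- intros U U' x y HU HU' Hne Ux Uy.
           pose proof (Hdis U U' x y HU HU' Hne Ux Uy).
           unfold r in *. pose proof (Rle_abs (Rs 1%nat)). lra.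
      * split; [|split].
        -- intros U HU; right; exact HU.
        -- auto.
        -- intros U U' x y -> -> Hne; congruence.
    + intros x _. destruct (classic (Y r x)) as [Hy|Hy].
      * exists 2%nat, (Y r). simpl. split; [lia|]. auto.
      * destruct (Hcover x) as [i Hi].
        exists 1%nat, (fun z => Xs i z /\ ~ Y r z). simpl. split; [lia|].
        split; [exists i; reflexivity | auto].
Qed.
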